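(* Let $(T_n)_{n\ge1}$ be a plane-oriented recursive tree and let $D_{n,j}$ be the degree of node $j$ in $T_n$. For fixed integers $2\le j\le n$ and every $d\in\{1,2,\dots,n-j+1\}$, $$\mathbb{P}(D_{n,j}=d)=\frac{\Gamma(d)\,\Gamma\!\left(j-\tfrac12\right)}{\Gamma\!\left(n-\tfrac12\right)}\sum_{i=0}^{d-1}\frac{(-1)^i\,\Gamma\!\left(n-1-\tfrac{i}{2}\right)}{\Gamma(i+1)\,\Gamma(d-i)\,\Gamma\!\left(j-1-\tfrac{i}{2}\right)},$$ with the convention $1/\Gamma(m)=0$ for nonpositive integers $m$.
   Context: A plane-oriented recursive tree (PORT) is the random sequence of trees $(T_n)_{n\ge1}$ defined as follows. $T_1$ is a single node labeled $1$ (the root). For $n\ge2$, $T_n$ is obtained from $T_{n-1}$ by adding a node labeled $n$ and an edge joining it to a node $i\in\{1,\dots,n-1\}$ of $T_{n-1}$, where, conditionally on $T_1,\dots,T_{n-1}$, node $i$ is chosen with probability $(c_{n-1,i}+1)/(2n-3)$, with $c_{n-1,i}$ the number of children of $i$ in $T_{n-1}$ (nodes previously attached to $i$). $D_{n,j}$ denotes the degree (number of incident edges) of the node labeled $j$ in $T_n$. Equivalently, node $i\ge2$ is chosen with probability $D_{n-1,i}/(2n-3)$ and the root with probability $(D_{n-1,1}+1)/(2n-3)$. *)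

(* Defs.v *)
From Stdlib Require Import Reals ZArith Arith List.
Open Scope R_scope.

(** A tree T_n on nodes 1..n is encoded by its list of parents
    [s = [p_2; p_3; ...; p_n]] where p_t in {1..t-1} is the node that the
    node labelled t was attached to (in T_t).  *)

Definition children (s : list nat) (i : nat) : nat :=
  List.count_occ Nat.eq_dec s i.

Definition degree (s : list nat) (j : nat) : nat :=
  children s j + (if Nat.leb 2 j then 1 else 0).

(** [port_expect m s f]: expectation of [f] (applied to the final parent list)
    when starting from the tree encoded by [s] (which has [length s + 1]
    nodes) and performing [m] further PORT growth steps. *)
Fixpoint port_expect (m : nat) (s : list nat) (f : list nat -> R) : R :=
  match m with
  | O => f s
  | S m' =>
      let k := (length s + 2)%nat in
      fold_right Rplus 0
        (map (fun i => (INR (children s i) + 1) / (2 * INR k - 3)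
                       * port_expect m' (s ++ i :: nil) f)
             (seq 1 (k - 1)))
  end.

Definition port_deg_prob (n j d : nat) : R :=
  port_expect (n - 1) nil (fun s => if Nat.eqb (degree s j) d then 1 else 0).

(** * Euler's Gamma function at half-integers: [Gamma_half m] = Γ(m/2).
    Determined by Γ(1/2) = sqrt PI, Γ(1) = 1, Γ(x+1) = x Γ(x). *)
Fixpoint gamma_pos (k : nat) : R :=
  match k with
  | O => 0 (* pole; never used *)
  | S O => sqrt PI
  | S (S k') => match k' with
                | O => 1
                | _ => INR k' / 2 * gamma_pos k'
                end
  end.

(** For negative odd m = -(2p+1): Γ(m/2) = Γ(1/2) / ∏_{t=0}^{p} ((m+2t)/2). *)
Fixpoint neg_prod (m : Z) (p : nat) : R :=
  match p with
  | O => IZR m / 2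
  | S p' => neg_prod m p' * (IZR m + 2 * INR p) / 2
  end.

Definition Gamma_half (m : Z) : R :=
  if (0 <? m)%Z then gamma_pos (Z.to_nat m)
  else if Z.even m then 0 (* pole at a nonpositive integer *)
  else sqrt PI / neg_prod m (Z.to_nat ((- m - 1) / 2)).

Definition rgamma_half (m : Z) : R :=
  if ((m <=? 0)%Z && Z.even m)%bool then 0 else / Gamma_half m.

(* Main.v *)
Require Import Defs.
From Stdlib Require Import Reals ZArith Arith List Lia Lra.
Open Scope R_scope.

Definition sumL (l : list nat) (F : nat -> R) : R := fold_right Rplus 0 (map F l).

Lemma sumL_ext l F G : (forall i, In i l -> F i = G i) -> sumL l F = sumL l G.
Proof.
  induction l as [|a l IH]; intros H; simpl; auto.
  unfold sumL in *; simpl. rewrite H by (left; auto). rewrite IH; auto.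
  intros; apply H; right; auto.
Qed.

Lemma sumL_plus l F G : sumL l (fun i => F i + G i) = sumL l F + sumL l G.
Proof. induction l; unfold sumL in *; simpl; [lra|]. rewrite IHl; lra. Qed.

Lemma sumL_scal l F a : sumL l (fun i => a * F i) = a * sumL l F.
Proof. induction l; unfold sumL in *; simpl; [lra|]. rewrite IHl; lra. Qed.

Lemma sumL_const l a : sumL l (fun _ => a) = INR (length l) * a.
Proof. induction l; unfold sumL in *; simpl length; simpl fold_right; [simpl; lra|]. rewrite IHl, S_INR; lra. Qed.

Lemma sumL_split l F j : NoDup l -> In j l ->
  sumL l F = F j + sumL l (fun i => if Nat.eqb i j then 0 else F i).
Proof.
  induction l as [|a l IH]; intros Hn Hi; [destruct Hi|].
  inversion Hn; subst. unfold sumL in *; simpl.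
  destruct Hi as [<-|Hi].
  - rewrite Nat.eqb_refl.
    assert (E: map (fun i => if Nat.eqb i a then 0 else F i) l = map F l).
    { apply map_ext_in. intros x Hx. destruct (Nat.eqb_spec x a); subst; tauto. }
    rewrite E; lra.
  - destruct (Nat.eqb_spec a j); [subst; tauto|]. rewrite (IH H2 Hi). lra.
Qed.

Definition valid (s : list nat) := forall x, In x s -> (1 <= x <= length s)%nat.

Lemma valid_app s i : valid s -> (1 <= i <= length s + 1)%nat -> valid (s ++ i :: nil).
Proof.
  intros Hv Hi x Hx. rewrite length_app; simpl.
  apply in_app_or in Hx. destruct Hx as [Hx|[<-|[]]]; [apply Hv in Hx|]; lia.
Qed.

Lemma sum_children s N : (forall x, In x s -> (1 <= x <= N)%nat) ->
  sumL (seq 1 N) (fun i => INR (children s i)) = INR (length s).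
Proof.
  induction s as [|a s IH]; intros H.
  - unfold children; simpl. rewrite sumL_const. lra.
  - simpl length. rewrite S_INR, <- IH by (intros; apply H; right; auto).
    rewrite (sumL_split _ _ a) by (apply seq_NoDup || (apply in_seq; specialize (H a (or_introl eq_refl)); lia)).
    rewrite (sumL_split (seq 1 N) (fun i => INR (children s i)) a)
      by (apply seq_NoDup || (apply in_seq; specialize (H a (or_introl eq_refl)); lia)).
    unfold children at 1. rewrite count_occ_cons_eq by auto. rewrite S_INR.
    assert (E: sumL (seq 1 N) (fun i => if Nat.eqb i a then 0 else INR (children (a :: s) i))
       = sumL (seq 1 N) (fun i => if Nat.eqb i a then 0 else INR (children s i))).
    { apply sumL_ext. intros x _. destruct (Nat.eqb_spec x a); auto.
      unfold children. rewrite count_occ_cons_neq by auto. auto. }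
    rewrite E. unfold children. lra.
Qed.

Lemma pe_S m s f : port_expect (S m) s f =
  sumL (seq 1 (length s + 1)) (fun i => (INR (children s i) + 1) / (2 * INR (length s + 2) - 3)
       * port_expect m (s ++ i :: nil) f).
Proof.
  cbn [port_expect]. replace (length s + 2 - 1)%nat with (length s + 1)%nat by lia. reflexivity.
Qed.

Lemma weights_sum s : valid s ->
  sumL (seq 1 (length s + 1)) (fun i => (INR (children s i) + 1) / (2 * INR (length s + 2) - 3)) = 1.
Proof.
  intros Hv.
  assert (E: forall i, (INR (children s i) + 1) / (2 * INR (length s + 2) - 3)
      = / (2 * INR (length s + 2) - 3) * (INR (children s i) + 1)) by (intros; unfold Rdiv; ring).
  rewrite (sumL_ext _ _ _ (fun i _ => E i)), sumL_scal, sumL_plus, sumL_const, length_seq.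
  rewrite sum_children by (intros x Hx; apply Hv in Hx; lia).
  rewrite !plus_INR. simpl (INR 2). simpl (INR 1).
  field. pose proof (pos_INR (length s)). lra.
Qed.

Lemma pe_const m s f c : valid s ->
  (forall s', valid s' -> length s' = (length s + m)%nat -> f s' = c) -> port_expect m s f = c.
Proof.
  revert s; induction m as [|m IH]; intros s Hv H.
  - simpl. apply H; auto; lia.
  - rewrite pe_S. transitivity (c * sumL (seq 1 (length s + 1)) (fun i => (INR (children s i) + 1) / (2 * INR (length s + 2) - 3))).
    2: rewrite weights_sum; auto; ring.
    rewrite <- sumL_scal. apply sumL_ext. intros i Hi. apply in_seq in Hi.
    rewrite (IH (s ++ i :: nil)). ring.
    apply valid_app; auto; lia.
    intros s' Hs' Hl. apply H; auto. rewrite Hl, length_app. simpl. lia.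
Qed.

Lemma pe_comp a b s f : port_expect (a + b) s f = port_expect a s (fun s' => port_expect b s' f).
Proof.
  revert s; induction a as [|a IH]; intros s; [reflexivity|].
  simpl plus. rewrite !pe_S. apply sumL_ext. intros. rewrite IH. reflexivity.
Qed.

Fixpoint qf (m k c : nat) (g : nat -> R) : R :=
  match m with
  | O => g c
  | S m' => INR c / (2 * INR k - 3) * qf m' (S k) (S c) g
            + (1 - INR c / (2 * INR k - 3)) * qf m' (S k) c g
  end.

Lemma deg_app s i j : degree (s ++ i :: nil) j = if Nat.eqb i j then S (degree s j) else degree s j.
Proof.
  unfold degree, children. rewrite count_occ_app. simpl.
  destruct (Nat.eq_dec i j) as [e|e]; destruct (Nat.eqb_spec i j); try tauto; lia.
Qed.

Lemma markov j g m s : valid s -> (2 <= j <= length s + 1)%nat ->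
  port_expect m s (fun s => g (degree s j)) = qf m (length s + 2) (degree s j) g.
Proof.
  revert s; induction m as [|m IH]; intros s Hv Hj; [reflexivity|].
  rewrite pe_S.
  set (D := 2 * INR (length s + 2) - 3).
  set (w := fun i => (INR (children s i) + 1) / D).
  set (K := S (length s + 2)).
  set (c := degree s j).
  assert (E1: forall i, In i (seq 1 (length s + 1)) ->
     (INR (children s i) + 1) / D * port_expect m (s ++ i :: nil) (fun s0 => g (degree s0 j))
     = w i * qf m K (if Nat.eqb i j then S c else c) g).
  { intros i Hi. apply in_seq in Hi. rewrite IH.
    - rewrite length_app, deg_app. simpl length.
      replace (length s + 1 + 2)%nat with K by (unfold K; lia). reflexivity.
    - apply valid_app; auto; lia.
    - rewrite length_app; simpl; lia. }
  rewrite (sumL_ext _ _ _ E1).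
  assert (Hin: In j (seq 1 (length s + 1))) by (apply in_seq; lia).
  rewrite (sumL_split _ _ j (seq_NoDup _ _) Hin). rewrite Nat.eqb_refl.
  assert (E2: forall i, In i (seq 1 (length s + 1)) ->
    (if Nat.eqb i j then 0 else w i * qf m K (if Nat.eqb i j then S c else c) g)
    = qf m K c g * (if Nat.eqb i j then 0 else w i)).
  { intros i _. destruct (Nat.eqb i j); ring. }
  rewrite (sumL_ext _ _ _ E2), sumL_scal.
  assert (W := weights_sum s Hv). fold D in W. fold w in W.
  rewrite (sumL_split _ _ j (seq_NoDup _ _) Hin) in W.
  assert (Hc: INR c = INR (children s j) + 1).
  { unfold c, degree. replace (Nat.leb 2 j) with true by (symmetry; apply Nat.leb_le; lia).
    rewrite plus_INR. reflexivity. }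
  simpl qf. fold D. unfold w in *. rewrite Hc.
  replace (sumL (seq 1 (length s + 1))
      (fun i : nat => if Nat.eqb i j then 0 else (INR (children s i) + 1) / D))
    with (1 - (INR (children s j) + 1) / D) by lra. fold K. ring.
Qed.

Lemma qf_S m k c g : qf (S m) k c g = qf m k c (fun c' => INR c' / (2*INR (k+m) - 3) * g (S c')
   + (1 - INR c' / (2*INR (k+m) - 3)) * g c').
Proof.
  revert k c; induction m as [|m IH]; intros k c.
  - simpl. rewrite Nat.add_0_r. reflexivity.
  - change (qf (S (S m)) k c g) with (INR c / (2 * INR k - 3) * qf (S m) (S k) (S c) g
            + (1 - INR c / (2 * INR k - 3)) * qf (S m) (S k) c g).
    rewrite !IH. replace (S k + m)%nat with (k + S m)%nat by lia. reflexivity.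
Qed.

Lemma qf_lin m k c f h a b : qf m k c (fun x => a * f x + b * h x) = a * qf m k c f + b * qf m k c h.
Proof.
  revert k c; induction m as [|m IH]; intros k c; simpl; [reflexivity|].
  rewrite !IH. ring.
Qed.

Lemma qf_ext m k c f h : (forall x, f x = h x) -> qf m k c f = qf m k c h.
Proof.
  intros E; revert k c; induction m as [|m IH]; intros k c; simpl; [apply E|].
  rewrite !IH. reflexivity.
Qed.

Definition Hq (j m d : nat) := qf m (j+1) 1 (fun c => if Nat.eqb c d then 1 else 0).

Lemma Hq_rec j m d' : Hq j (S m) (S d') =
  INR d' / (2 * INR (j+1+m) - 3) * Hq j m d' + (1 - INR (S d') / (2 * INR (j+1+m) - 3)) * Hq j m (S d').
Proof.
  unfold Hq. rewrite qf_S, <- qf_lin. apply qf_ext. intros x.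
  destruct (Nat.eqb_spec x d'), (Nat.eqb_spec (S x) (S d')), (Nat.eqb_spec x (S d')); subst; try lia; ring.
Qed.

Lemma Hq_0 j d : Hq j 0 d = if Nat.eqb 1 d then 1 else 0.
Proof. reflexivity. Qed.

Fixpoint prodR (k : nat) (f : nat -> R) : R :=
  match k with O => 1 | S k' => prodR k' f * f k' end.

Definition Pf (j m i : nat) : R :=
  prodR m (fun u => (2 * INR j - 2 - INR i + 2 * INR u) / (2 * INR j - 1 + 2 * INR u)).

Definition Gs (j m e : nat) : R := sum_f_R0 (fun i => C e i * (-1) ^ i * Pf j m i) e.

Lemma sum_lin (U V : nat -> R) a b N :
  sum_f_R0 (fun i => a * U i + b * V i) N = a * sum_f_R0 U N + b * sum_f_R0 V N.
Proof. induction N; simpl; [ring|]. rewrite IHN. ring. Qed.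

Lemma C_step n i : (i <= n)%nat -> INR (S n) * C n i = INR (S n - i) * C (S n) i.
Proof.
  intros Hi. unfold C. replace (S n - i)%nat with (S (n - i)) by lia.
  change (fact (S n)) with (S n * fact n)%nat.
  change (fact (S (n - i))) with (S (n - i) * fact (n - i))%nat.
  rewrite !mult_INR.
  pose proof (INR_fact_neq_0 i). pose proof (INR_fact_neq_0 (n - i)).
  pose proof (INR_fact_neq_0 n). assert (INR (S (n - i)) <> 0) by (apply not_0_INR; lia).
  field. auto.
Qed.

Lemma Cnn n : C n n = 1.
Proof. unfold C. rewrite Nat.sub_diag. simpl (fact 0). pose proof (INR_fact_neq_0 n). simpl INR. field; auto. Qed.

Lemma Hq_Gs j : (1 <= j)%nat -> forall m e, Hq j m (S e) = Gs j m e.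
Proof.
  intros Hj m. induction m as [|m IH]; intros e.
  - rewrite Hq_0. unfold Gs. simpl Pf.
    assert (B := binomial (-1) 1 e).
    replace (-1 + 1) with 0 in B by ring.
    transitivity (sum_f_R0 (fun i : nat => C e i * (-1) ^ i * 1 ^ (e - i)) e).
    + rewrite <- B. destruct e; simpl; [reflexivity|apply eq_sym, Rmult_0_l].
    + apply sum_eq. intros i _. rewrite pow1. unfold Pf. simpl prodR. ring.
  - assert (HD: 2 * INR (j + 1 + m) - 3 = 2 * INR j - 1 + 2 * INR m)
      by (rewrite !plus_INR; simpl (INR 1); ring).
    assert (Dpos: 0 < 2 * INR j - 1 + 2 * INR m).
    { pose proof (pos_INR m). apply le_INR in Hj. simpl (INR 1) in Hj. lra. }
    assert (Ef0: forall i, Pf j (S m) i = Pf j m i * ((2 * INR j - 2 - INR i + 2 * INR m) / (2 * INR j - 1 + 2 * INR m)))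
        by reflexivity.
    rewrite Hq_rec, HD. destruct e as [|e].
    + rewrite IH. unfold Gs. simpl sum_f_R0. rewrite Ef0, Cnn. change (INR 0) with 0. change (INR 1) with 1.
      field. lra.
    + rewrite !IH. unfold Gs. cbn [sum_f_R0].
      set (D := 2 * INR j - 1 + 2 * INR m).
      assert (Ef: forall i, Pf j (S m) i = Pf j m i * ((2 * INR j - 2 - INR i + 2 * INR m) / D))
        by reflexivity.
      rewrite Ef, Cnn.
      rewrite (sum_eq (fun i => C (S e) i * (-1) ^ i * (Pf j m i * ((2 * INR j - 2 - INR i + 2 * INR m) / D)))
         (fun i => INR (S e) / D * (C e i * (-1) ^ i * Pf j m i)
           + (1 - INR (S (S e)) / D) * (C (S e) i * (-1) ^ i * Pf j m i))).
      * rewrite sum_lin. rewrite !S_INR. generalize ((-1) ^ S e); intro sg. assert (D <> 0) by (unfold D; lra). generalize (sum_f_R0 (fun i : nat => C e i * (-1) ^ i * Pf j m i) e) (sum_f_R0 (fun i : nat => C (S e) i * (-1) ^ i * Pf j m i) e); intros. unfold D in *. field. lra.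
      * intros i Hi.
        assert (Ci := C_step e i Hi).
        assert (INR (S e) <> 0) by (apply not_0_INR; lia).
        replace (C e i) with (INR (S e - i) * C (S e) i / INR (S e)) by (rewrite <- Ci; field; auto).
        rewrite minus_INR by lia. generalize ((-1) ^ i); intro sg. rewrite !S_INR in *. unfold D in *. field. lra.
Qed.

Lemma gp_rec k : (1 <= k)%nat -> gamma_pos (S (S k)) = INR k / 2 * gamma_pos k.
Proof. intros H. destruct k; [lia|]. reflexivity. Qed.

Lemma gp_pos k : 0 < gamma_pos (S k) /\ 0 < gamma_pos (S (S k)).
Proof.
  induction k as [|k IH].
  - split; simpl. apply sqrt_lt_R0, PI_RGT_0. lra.
  - destruct IH as [H1 H2]. split; auto.
    rewrite gp_rec by lia. apply Rmult_lt_0_compat; auto.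
    apply Rmult_lt_0_compat; [apply lt_0_INR; lia| lra].
Qed.

Lemma gp_pos' k : (1 <= k)%nat -> 0 < gamma_pos k.
Proof. intros H; destruct k; [lia|]. apply gp_pos. Qed.

Lemma gp_even k : gamma_pos (2 * k + 2) = INR (fact k).
Proof.
  induction k as [|k IH]; [reflexivity|].
  replace (2 * S k + 2)%nat with (S (S (2 * k + 2))) by lia.
  rewrite gp_rec by lia. rewrite IH. change (fact (S k)) with (S k * fact k)%nat.
  rewrite mult_INR. replace (INR (2 * k + 2)) with (2 * INR k + 2) by (rewrite plus_INR, mult_INR; simpl; ring). rewrite S_INR. field.
Qed.

Lemma gh_nat k : (1 <= k)%nat -> Gamma_half (Z.of_nat k) = gamma_pos k.
Proof.
  intros H. unfold Gamma_half. replace (0 <? Z.of_nat k)%Z with true by (symmetry; apply Z.ltb_lt; lia).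
  rewrite Nat2Z.id. reflexivity.
Qed.

Lemma rgh_pos m : (0 < m)%Z -> rgamma_half m = / Gamma_half m.
Proof.
  intros H. unfold rgamma_half. replace (m <=? 0)%Z with false by (symmetry; apply Z.leb_gt; lia).
  reflexivity.
Qed.

Lemma fact_part e i : (i <= e)%nat ->
  Gamma_half (2 * Z.of_nat (S e)) * rgamma_half (2 * Z.of_nat i + 2)
  * rgamma_half (2 * Z.of_nat (S e) - 2 * Z.of_nat i) = C e i.
Proof.
  intros H.
  rewrite !rgh_pos by lia.
  replace (2 * Z.of_nat (S e))%Z with (Z.of_nat (2 * e + 2)) by lia.
  replace (2 * Z.of_nat i + 2)%Z with (Z.of_nat (2 * i + 2)) by lia.
  replace (Z.of_nat (2 * e + 2) - 2 * Z.of_nat i)%Z with (Z.of_nat (2 * (e - i) + 2)) by lia.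
  rewrite !gh_nat by lia. rewrite !gp_even. unfold C.
  pose proof (INR_fact_neq_0 i). pose proof (INR_fact_neq_0 (e - i)).
  field. auto.
Qed.

Definition adm (m : Z) := (0 < m)%Z \/ Z.odd m = true.

Lemma neg_prod_shift m q : neg_prod m (S q) = IZR m / 2 * neg_prod (m + 2) q.
Proof.
  induction q as [|q IH].
  - simpl. rewrite plus_IZR. simpl (INR 1). field.
  - change (neg_prod m (S (S q))) with (neg_prod m (S q) * (IZR m + 2 * INR (S (S q))) / 2).
    change (neg_prod (m + 2) (S q)) with (neg_prod (m+2) q * (IZR (m+2) + 2 * INR (S q)) / 2).
    rewrite IH, plus_IZR, !S_INR. field.
Qed.

Lemma neg_prod_nz m q : IZR m + 2 * INR q < 0 -> neg_prod m q <> 0.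
Proof.
  induction q as [|q IH]; intros H.
  - simpl in *. lra.
  - change (neg_prod m (S q)) with (neg_prod m q * (IZR m + 2 * INR (S q)) / 2). rewrite S_INR in *. pose proof (pos_INR q).
    assert (neg_prod m q <> 0) by (apply IH; lra).
    unfold Rdiv. apply Rmult_integral_contrapositive_currified; [|lra].
    apply Rmult_integral_contrapositive_currified; auto. lra.
Qed.

Lemma gh_negodd p : Gamma_half (- (2 * Z.of_nat p + 1)) = sqrt PI / neg_prod (- (2 * Z.of_nat p + 1)) p.
Proof.
  unfold Gamma_half.
  replace (0 <? - (2 * Z.of_nat p + 1))%Z with false by (symmetry; apply Z.ltb_ge; lia).
  replace (Z.even (- (2 * Z.of_nat p + 1))) with false
    by (rewrite Z.even_opp, Z.add_comm, Z.even_add_mul_2; reflexivity).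
  replace (- - (2 * Z.of_nat p + 1) - 1)%Z with (Z.of_nat p * 2)%Z by lia.
  rewrite Z.div_mul by lia. rewrite Nat2Z.id. reflexivity.
Qed.

Lemma adm_cases m : adm m -> (exists k, (1 <= k)%nat /\ m = Z.of_nat k) \/ (exists p, m = (- (2 * Z.of_nat p + 1))%Z).
Proof.
  intros [H|H].
  - left. exists (Z.to_nat m). split; lia.
  - destruct (Z_lt_le_dec 0 m).
    + left. exists (Z.to_nat m). split; lia.
    + right. apply Z.odd_spec in H. destruct H as [z Hz]. exists (Z.to_nat (- z - 1)). lia.
Qed.

Lemma gh_rec_nz m : adm m -> Gamma_half (m + 2) = IZR m / 2 * Gamma_half m /\ Gamma_half m <> 0.
Proof.
  intros Ha. destruct (adm_cases m Ha) as [[k [Hk ->]]|[p ->]].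
  - replace (Z.of_nat k + 2)%Z with (Z.of_nat (S (S k))) by lia.
    rewrite !gh_nat by lia. rewrite gp_rec by lia. rewrite <- INR_IZR_INZ. split; auto.
    pose proof (gp_pos' k Hk). lra.
  - assert (Hs: 0 < sqrt PI) by (apply sqrt_lt_R0, PI_RGT_0).
    assert (Hm: IZR (- (2 * Z.of_nat p + 1)) <> 0) by (apply not_0_IZR; lia).
    assert (Hnp: neg_prod (- (2 * Z.of_nat p + 1)) p <> 0).
    { apply neg_prod_nz. rewrite opp_IZR, plus_IZR, mult_IZR, <- INR_IZR_INZ. lra. }
    rewrite gh_negodd. split.
    2: { unfold Rdiv. apply Rmult_integral_contrapositive_currified; [lra|]. apply Rinv_neq_0_compat; auto. }
    destruct p as [|p].
    + simpl. unfold Gamma_half. simpl. field.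
    + replace (- (2 * Z.of_nat (S p) + 1) + 2)%Z with (- (2 * Z.of_nat p + 1))%Z by lia.
      rewrite gh_negodd. rewrite neg_prod_shift in *.
      replace (- (2 * Z.of_nat (S p) + 1) + 2)%Z with (- (2 * Z.of_nat p + 1))%Z in * by lia.
      assert (neg_prod (- (2 * Z.of_nat p + 1)) p <> 0).
      { intro E. apply Hnp. rewrite E. ring. }
      field. split; auto.
Qed.

Lemma gh_iter m k : adm m ->
  Gamma_half (m + 2 * Z.of_nat k) = Gamma_half m * prodR k (fun t => (IZR m + 2 * INR t) / 2)
  /\ Gamma_half (m + 2 * Z.of_nat k) <> 0.
Proof.
  intros Ha. induction k as [|k IH].
  - simpl. rewrite Z.add_0_r. split; [ring|]. apply gh_rec_nz; auto.
  - assert (Ha': adm (m + 2 * Z.of_nat k)).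
    { destruct Ha as [H|H]; [left; lia|right]. rewrite Z.odd_add_mul_2. auto. }
    destruct (gh_rec_nz _ Ha') as [R1 R2].
    replace (m + 2 * Z.of_nat (S k))%Z with (m + 2 * Z.of_nat k + 2)%Z by lia.
    assert (Ha'': adm (m + 2 * Z.of_nat k + 2)).
    { destruct Ha' as [H|H]; [left; lia|right].
      replace (m + 2 * Z.of_nat k + 2)%Z with (m + 2 * Z.of_nat k + 2 * 1)%Z by lia.
      rewrite Z.odd_add_mul_2. auto. }
    destruct (gh_rec_nz _ Ha'') as [_ R3].
    split; auto.
    rewrite R1. destruct IH as [IH _]. rewrite IH. simpl prodR.
    rewrite plus_IZR, mult_IZR, <- INR_IZR_INZ. simpl (IZR 2). ring.
Qed.

Lemma prodR_ext k f g : (forall t, (t < k)%nat -> f t = g t) -> prodR k f = prodR k g.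
Proof. induction k; intros H; simpl; auto. rewrite IHk, H; auto. Qed.

Lemma prodR_div k f g : (forall t, g t <> 0) -> prodR k (fun t => f t / g t) * prodR k g = prodR k f.
Proof. intros Hg. induction k; simpl; [ring|]. rewrite <- IHk. field. auto. Qed.

Lemma prodR_zero k f u : (u < k)%nat -> f u = 0 -> prodR k f = 0.
Proof.
  induction k; intros Hu Hf; [lia|]. simpl.
  destruct (Nat.eq_dec u k) as [->|ne]; [rewrite Hf; ring|]. rewrite IHk by (auto; lia). ring.
Qed.

Lemma E_part j m i : (2 <= j)%nat -> (i <= m)%nat ->
  Gamma_half (2 * Z.of_nat j - 1) * rgamma_half (2 * Z.of_nat (j + m) - 1)
  * Gamma_half (2 * Z.of_nat (j + m) - 2 - Z.of_nat i) * rgamma_half (2 * Z.of_nat j - 2 - Z.of_nat i)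
  = Pf j m i.
Proof.
  intros Hj Hi.
  set (a := (2 * Z.of_nat j - 1)%Z). set (m0 := (2 * Z.of_nat j - 2 - Z.of_nat i)%Z).
  assert (Ha: adm a) by (left; unfold a; lia).
  rewrite rgh_pos by lia.
  replace (2 * Z.of_nat (j + m) - 1)%Z with (a + 2 * Z.of_nat m)%Z by (unfold a; lia).
  replace (2 * Z.of_nat (j + m) - 2 - Z.of_nat i)%Z with (m0 + 2 * Z.of_nat m)%Z by (unfold m0; lia).
  destruct (gh_iter a m Ha) as [A1 A2].
  assert (Ga: Gamma_half a <> 0) by (apply gh_rec_nz; auto).
  assert (IZa: IZR a = 2 * INR j - 1) by (unfold a; rewrite minus_IZR, mult_IZR, <- INR_IZR_INZ; reflexivity).
  assert (IZm0: IZR m0 = 2 * INR j - 2 - INR i)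
    by (unfold m0; rewrite !minus_IZR, mult_IZR, <- !INR_IZR_INZ; reflexivity).
  assert (Hg: forall t, (IZR a + 2 * INR t) / 2 <> 0).
  { intros t. rewrite IZa. apply le_INR in Hj. pose proof (pos_INR t). simpl in Hj. lra. }
  destruct (Z_le_gt_dec m0 0) as [Hle|Hgt]; [destruct (Z.even m0) eqn:Hev|].
  -
    unfold rgamma_half. replace ((m0 <=? 0)%Z && Z.even m0)%bool with true
      by (rewrite Hev; symmetry; apply andb_true_intro; split; auto; apply Z.leb_le; auto).
    apply Z.even_spec in Hev. destruct Hev as [z Hz].
    symmetry. rewrite Rmult_0_r. unfold Pf.
    apply (prodR_zero _ _ (Z.to_nat (- z))).
    + unfold m0 in Hz. lia.
    + replace (2 * INR j - 2 - INR i + 2 * INR (Z.to_nat (- z))) with (IZR (m0 + 2 * Z.of_nat (Z.to_nat (-z)))).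
      * replace (m0 + 2 * Z.of_nat (Z.to_nat (- z)))%Z with 0%Z by lia. unfold Rdiv. ring.
      * rewrite plus_IZR, mult_IZR, <- INR_IZR_INZ, IZm0. reflexivity.
  - assert (Hm: adm m0).
    { right. rewrite <- Z.negb_even, Hev. reflexivity. }
    destruct (gh_iter m0 m Hm) as [M1 M2].
    assert (G0: Gamma_half m0 <> 0) by (apply gh_rec_nz; auto).
    unfold rgamma_half. replace ((m0 <=? 0)%Z && Z.even m0)%bool with false by (rewrite Hev; destruct (m0 <=? 0)%Z; reflexivity).
    rewrite M1, A1.
    assert (PA: prodR m (fun t => (IZR a + 2 * INR t) / 2) <> 0).
    { intro E. apply A2. rewrite A1, E. ring. }
    rewrite <- (prodR_div m (fun t => (IZR m0 + 2 * INR t) / 2) _ Hg).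
    replace (prodR m (fun t => (IZR m0 + 2 * INR t) / 2 / ((IZR a + 2 * INR t) / 2))) with (Pf j m i).
    + field. auto.
    + unfold Pf. apply prodR_ext. intros t _. rewrite IZa, IZm0. field.
      apply le_INR in Hj. pose proof (pos_INR t). simpl in Hj. lra.
  - assert (Hm: adm m0) by (left; lia).
    destruct (gh_iter m0 m Hm) as [M1 M2].
    assert (G0: Gamma_half m0 <> 0) by (apply gh_rec_nz; auto).
    rewrite (rgh_pos m0) by lia.
    rewrite M1, A1.
    assert (PA: prodR m (fun t => (IZR a + 2 * INR t) / 2) <> 0).
    { intro E. apply A2. rewrite A1, E. ring. }
    rewrite <- (prodR_div m (fun t => (IZR m0 + 2 * INR t) / 2) _ Hg).
    replace (prodR m (fun t => (IZR m0 + 2 * INR t) / 2 / ((IZR a + 2 * INR t) / 2))) with (Pf j m i).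
    + field. auto.
    + unfold Pf. apply prodR_ext. intros t _. rewrite IZa, IZm0. field.
      apply le_INR in Hj. pose proof (pos_INR t). simpl in Hj. lra.
Qed.

Theorem proposition3p1 (n j d : nat) :
  (2 <= j <= n)%nat -> (1 <= d <= n - j + 1)%nat ->
  port_deg_prob n j d =
    Gamma_half (2 * Z.of_nat d) * Gamma_half (2 * Z.of_nat j - 1)
    * rgamma_half (2 * Z.of_nat n - 1)
    * sum_f_R0 (fun i =>
        (-1) ^ i * Gamma_half (2 * Z.of_nat n - 2 - Z.of_nat i)
        * rgamma_half (2 * Z.of_nat i + 2)
        * rgamma_half (2 * Z.of_nat d - 2 * Z.of_nat i)
        * rgamma_half (2 * Z.of_nat j - 2 - Z.of_nat i))
      (d - 1).
Proof.
  intros Hj Hd.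
  destruct d as [|e]; [lia|]. replace (S e - 1)%nat with e by lia.
  set (m := (n - j)%nat).
  assert (Hn: n = (j + m)%nat) by (unfold m; lia).
  assert (Hem: (e <= m)%nat) by (unfold m; lia).
  transitivity (Gs j m e).
  - rewrite <- Hq_Gs by lia. unfold port_deg_prob.
    replace (n - 1)%nat with ((j - 1) + m)%nat by lia.
    rewrite pe_comp. apply pe_const.
    + intros x [].
    + intros s' Hv Hl. simpl in Hl.
      assert (Hc: children s' j = 0%nat).
      { unfold children. apply count_occ_not_In. intro Hin. apply Hv in Hin. lia. }
      transitivity (qf m (length s' + 2) (degree s' j) (fun c => if Nat.eqb c (S e) then 1 else 0)).
      * apply (markov j (fun c => if Nat.eqb c (S e) then 1 else 0) m s' Hv). lia.
      * unfold Hq. replace (length s' + 2)%nat with (j + 1)%nat by lia.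
        unfold degree. rewrite Hc. replace (Nat.leb 2 j) with true by (symmetry; apply Nat.leb_le; lia).
        reflexivity.
  - unfold Gs. rewrite scal_sum. apply sum_eq. intros i Hi.
    rewrite <- (fact_part e i Hi). rewrite <- (E_part j m i) by lia. rewrite <- Hn.
    generalize ((-1) ^ i). intro sg. ring.
Qed.
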